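(* Let $\mathcal{S}$ and $\mathcal{A}$ be finite sets and consider a Markov decision process in which, for each $(s,a)\in\mathcal{S}\times\mathcal{A}$, the pair (random reward, next state) $(\tilde r(s,a),\tilde s')$ has joint law $P(\cdot,\cdot\mid s,a)$, with $\tilde r(s,a)\in[0,1]$ almost surely and $\tilde r(s,a)$ having a bounded density for every $(s,a)$. Let $\gamma\in(0,1)$, let $\rho$ be a coherent risk measure, and let $d$ be a probability distribution on $\mathcal{S}$ with $0<d(s)\le 1$ for all $s$. Consider softmax policies $\pi_\theta(a\mid s)=\exp(\theta(s,a))/\sum_{b\in\mathcal{A}}\exp(\theta(s,b))$, $\theta\in\mathbb{R}^{\mathcal{S}\times\mathcal{A}}$, and the iteration $$\theta_{t+1}=\theta_t+\eta\,\nabla_\theta\Big[\sum_{s} d(s)\sum_a \pi_\theta(a\mid s)\,Q^{\pi_t}(s,a)\Big]\Big|_{\theta=\theta_t},$$ where $\pi_t:=\pi_{\theta_t}$ and $Q^{\pi_t}$ is held fixed (not differentiated); equivalently $\theta_{t+1}(s,a)=\theta_t(s,a)+\eta\, d(s)\pi_t(a\mid s)\big(Q^{\pi_t}(s,a)-V^{\pi_t}(s)\big)$. If $\eta\le(1-\gamma)/5$, then for every $t$ and all $(s,a)\in\mathcal{S}\times\mathcal{A}$, $$Q^{\pi_{t+1}}(s,a)\ge Q^{\pi_t}(s,a)\quad\text{and}\quad V^{\pi_{t+1}}(s)\ge V^{\pi_t}(s).$$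
   Context: A risk measure $\rho$ maps a real random variable (a return) to $\mathbb{R}\cup\{\pm\infty\}$. It is coherent if for all random variables $\tilde x,\tilde y$: (concavity) $\rho(\lambda\tilde x+(1-\lambda)\tilde y)\ge\lambda\rho(\tilde x)+(1-\lambda)\rho(\tilde y)$ for $\lambda\in[0,1]$; (monotonicity) $\tilde x\le\tilde y$ implies $\rho(\tilde x)\le\rho(\tilde y)$; (translation invariance) $\rho(\tilde x+c)=\rho(\tilde x)+c$ for $c\in\mathbb{R}$; (positive homogeneity) $\rho(\lambda\tilde x)=\lambda\rho(\tilde x)$ for $\lambda\ge0$. Examples are the $\alpha$-expectile and the left-tail $\alpha$-CVaR. For a stochastic Markov policy $\pi$, the Bellman operator is $(\mathcal{T}^\pi Q)(s,a)=\rho\big(\tilde r(s,a)+\gamma\sum_{a'}\pi(a'\mid\tilde s')Q(\tilde s',a')\big)$, where $\rho$ is taken over the joint randomness of $(\tilde r(s,a),\tilde s')\sim P(\cdot,\cdot\mid s,a)$. $Q^\pi$ denotes the unique fixed point of $\mathcal{T}^\pi$ (the dynamic-risk action-value function of $\pi$), and $V^\pi(s)=\sum_a\pi(a\mid s)Q^\pi(s,a)$. *)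

(* Defs.v *)
From HB Require Import structures.
From mathcomp Require Import all_boot all_order all_algebra.
From mathcomp Require Import all_classical all_reals all_analysis.
Set Implicit Arguments. Unset Strict Implicit. Unset Printing Implicit Defensive.
Import Order.TTheory GRing.Theory Num.Theory.
Local Open Scope classical_set_scope.
Local Open Scope ring_scope.

Section Defs.
Variables (R : realType) (S A : finType).
Variables (d0 : measure_display) (Omega : measurableType d0).

Definition softmax (theta : S -> A -> R) (s : S) (a : A) : R :=
  expR (theta s a) / \sum_(b : A) expR (theta s b).

Definition Vof (pi : S -> A -> R) (Q : S -> A -> R) (s : S) : R :=
  \sum_(a : A) pi s a * Q s a.

Definition random_var (X : Omega -> R) := measurable_fun setT X.

Definition coherent (rho : (Omega -> R) -> \bar R) : Prop :=
  [/\ (forall X Y (l : R), random_var X -> random_var Y -> 0 <= l <= 1 ->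
        (l%:E * rho X + (1 - l)%:E * rho Y <= rho (fun w => (l * X w + (1 - l) * Y w)%R))%E),
      (forall X Y, random_var X -> random_var Y -> (forall w, X w <= Y w) ->
        (rho X <= rho Y)%E),
      (forall X (c : R), random_var X -> rho (fun w => (X w + c)%R) = (rho X + c%:E)%E) &
      (forall X (l : R), random_var X -> 0 <= l -> rho (fun w => (l * X w)%R) = (l%:E * rho X)%E)].

(* (T^pi Q)(s,a) = rho( r(s,a) + gamma * sum_a' pi(a'|s') Q(s',a') ),
   the randomness (r(s,a), s') ~ P(.,.|s,a) being realized as (rt s a, st s a) *)
Definition bellman (rho : (Omega -> R) -> \bar R) (gamma : R)
  (rt : S -> A -> Omega -> R) (st : S -> A -> Omega -> S)
  (pi : S -> A -> R) (Q : S -> A -> R) (s : S) (a : A) : \bar R :=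
  rho (fun w => rt s a w + gamma * \sum_(a' : A) pi (st s a w) a' * Q (st s a w) a').

Definition is_Qpi rho gamma rt st (pi : S -> A -> R) (Q : S -> A -> R) : Prop :=
  forall s a, (Q s a)%:E = bellman rho gamma rt st pi Q s a.

Definition bounded_density (P : probability Omega R) (X : Omega -> R) : Prop :=
  exists f : R -> R, exists M : R,
    measurable_fun setT f /\ (forall x, 0 <= f x <= M) /\
    forall B : set R, measurable B ->
      P (X @^-1` B) = (\int[@lebesgue_measure R]_(x in B) (f x)%:E)%E.

End Defs.

(* Main.v *)
Require Import Defs.
From HB Require Import structures.
From mathcomp Require Import all_boot all_order all_algebra.
From mathcomp Require Import all_classical all_reals all_analysis.
Import Order.TTheory GRing.Theory Num.Theory.
Local Open Scope classical_set_scope.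
Local Open Scope ring_scope.

From mathcomp Require Import ring lra.
Lemma meas_comp (R : realType) (S : finType) (d0 : measure_display) (Omega : measurableType d0)
  (st : Omega -> S) (g : S -> R) :
  (forall s', measurable (st @^-1` [set s'])) ->
  measurable_fun setT (fun w => g (st w)).
Proof.
move=> hm.
have -> : (fun w => g (st w)) = (fun w => \sum_(s' <- index_enum S) (fun s' w => g s' * \1_(st @^-1` [set s']) w) s' w).
  apply/funext => w /=.
  rewrite (bigD1 (st w)) //= big1 ?addr0.
    by rewrite indicE mem_set ?mulr1.
  move=> s' hs'; rewrite indicE memNset ?mulr0 //=.
  by move=> h; rewrite h eqxx in hs'.
apply: measurable_sum => s' /=.
apply: measurable_realfun.measurable_funM; first exact: measurable_cst.
exact: measurable_realfun.measurable_indic.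
Qed.
Lemma exp_key (R: realType) (k x : R) : 0 <= k -> x <= expR (k*x) * x.
Proof.
move=> k0; have [x0|x0] := leP 0 x.
  rewrite -{1}(mul1r x) ler_wpM2r //.
  apply: le_trans (expR_ge1Dx _); rewrite lerDl; exact: mulr_ge0.
rewrite -{1}(mul1r x); apply: ler_wnM2r; first exact: ltW.
by rewrite expR_le1 mulr_ge0_le0 // ltW.
Qed.

Lemma sumZ_gt0 (R: realType) (A : finType) (f : A -> R) (a0 : A) :
  0 < \sum_(b : A) expR (f b).
Proof.
rewrite (bigD1 a0) //=; apply: ltr_pwDl; first exact: expR_gt0.
apply: sumr_ge0 => b _; exact: ltW (expR_gt0 _).
Qed.

Lemma softmax_sum1 (R: realType) (S A : finType) (th : S -> A -> R) s (a0 : A) :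
  \sum_(a : A) softmax th s a = 1.
Proof.
rewrite /softmax -mulr_suml mulfV //; apply: lt0r_neq0; exact: sumZ_gt0.
Qed.

Lemma softmax_ge0 (R: realType) (S A : finType) (th : S -> A -> R) s a :
  0 <= softmax th s a.
Proof.
rewrite /softmax divr_ge0 ?sumr_ge0 // => *; exact: ltW (expR_gt0 _).
Qed.

Lemma rearr (R : realType) (p q t r : R) : p * q / t * r = t^-1 * (p * (q * r)).
Proof. by rewrite [RHS]mulrC !mulrA mulrAC. Qed.

Lemma improve (R: realType) (S A : finType) (th th' : S -> A -> R) (Q : S -> A -> R) s (c : R) :
  0 <= c ->
  (forall a, th' s a = th s a + c * softmax th s a * (Q s a - Vof (softmax th) Q s)) ->
  Vof (softmax th) Q s <= Vof (softmax th') Q s.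
Proof.
move=> c0 hth.
case: (pickP (fun _ : A => true)) => [a0 _|A0]; last first.
  rewrite /Vof !big1 // => a; by have := A0 a.
set V := Vof (softmax th) Q s.
set x := fun a => Q s a - V.
rewrite -subr_ge0.
have -> : Vof (softmax th') Q s - V = \sum_a softmax th' s a * x a.
  rewrite /x; under eq_bigr do rewrite mulrBr.
  by rewrite sumrB -mulr_suml softmax_sum1 // mul1r.
set Z := \sum_(b : A) expR (th s b).
set Z' := \sum_(b : A) expR (th' s b).
have Zp : 0 < Z by exact: sumZ_gt0.
have Zp' : 0 < Z' by exact: sumZ_gt0.
have -> : \sum_a softmax th' s a * x a =
   Z'^-1 * \sum_a expR (th s a) * (expR (c * softmax th s a * x a) * x a).
  rewrite mulr_sumr; apply: eq_bigr => a _.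
  have e : softmax th' s a = expR (th s a) * expR (c * softmax th s a * x a) / Z'.
    by rewrite {1}/softmax hth expRD /x /V /Z'.
  rewrite e; exact: rearr.
apply: mulr_ge0; first by rewrite invr_ge0 ltW.
apply: (@le_trans _ _ (\sum_a expR (th s a) * x a)).
  have -> : \sum_a expR (th s a) * x a = Z * \sum_a softmax th s a * x a.
    rewrite mulr_sumr; apply: eq_bigr => a _; rewrite /softmax -/Z.
    by rewrite mulrA mulrCA divff ?mulr1 // lt0r_neq0.
  have -> : \sum_a softmax th s a * x a = 0.
    rewrite /x; under eq_bigr do rewrite mulrBr.
    by rewrite sumrB -mulr_suml softmax_sum1 // mul1r subrr.
  by rewrite mulr0.
apply: ler_sum => a _; apply: ler_wpM2l; first exact: ltW (expR_gt0 _).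
apply: (@exp_key R (c * softmax th s a) (x a)); apply: mulr_ge0 => //; exact: softmax_ge0.
Qed.

Theorem lemma1 (R : realType) (S A : finType)
  (d0 : measure_display) (Omega : measurableType d0) (P : probability Omega R)
  (rt : S -> A -> Omega -> R) (st : S -> A -> Omega -> S)
  (rho : (Omega -> R) -> \bar R) (gamma eta : R) (d : S -> R)
  (theta : nat -> S -> A -> R) (Q : nat -> S -> A -> R) :
  (forall s a, measurable_fun setT (rt s a)) ->
  (forall s a s', measurable (st s a @^-1` [set s'])) ->
  (forall s a, {ae P, forall w, 0 <= rt s a w <= 1}) ->
  (forall s a, bounded_density P (rt s a)) ->
  0 < gamma < 1 ->
  coherent rho ->
  (forall s, 0 < d s <= 1) -> \sum_(s : S) d s = 1 ->
  (forall t, is_Qpi rho gamma rt st (softmax (theta t)) (Q t)) ->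
  (forall t s a, theta t.+1 s a = theta t s a +
      eta * d s * softmax (theta t) s a *
        (Q t s a - Vof (softmax (theta t)) (Q t) s)) ->
  0 < eta -> eta <= (1 - gamma) / 5 ->
  forall t, (forall s a, Q t s a <= Q t.+1 s a) /\
            (forall s, Vof (softmax (theta t)) (Q t) s <=
                       Vof (softmax (theta t.+1)) (Q t.+1) s).
Proof.
move=> hrt hst _ _ /andP[g0 g1] hcoh hd _ hQ hth heta _ t.
case: hcoh => _ hmono htrans _.
have himp : forall s, Vof (softmax (theta t)) (Q t) s <= Vof (softmax (theta t.+1)) (Q t) s.
  move=> s; apply: (@improve R S A (theta t) (theta t.+1) (Q t) s (eta * d s)).
    by apply: mulr_ge0; [exact: ltW | case/andP: (hd s) => /ltW].
  exact: hth.
have hX : forall (pi Qf : S -> A -> R) s a,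
    measurable_fun setT (fun w => rt s a w + gamma * \sum_(a' : A) pi (st s a w) a' * Qf (st s a w) a').
  move=> pi Qf s a; apply: measurable_realfun.measurable_funD; first exact: hrt.
  apply: measurable_realfun.measurable_funM; first exact: measurable_cst.
  exact: (@meas_comp R S d0 Omega (st s a) (fun s' => \sum_(a' : A) pi s' a' * Qf s' a') (hst s a)).
have key : forall dl, (forall s a, Q t s a + dl <= Q t.+1 s a) ->
    forall s a, Q t s a + gamma * dl <= Q t.+1 s a.
  move=> dl hdl s a.
  rewrite -lee_fin (hQ t.+1 s a) EFinD (hQ t s a) /bellman.
  apply: (@le_trans _ _ (rho (fun w => rt s a w + gamma * \sum_(a' : A) softmax (theta t.+1) (st s a w) a' * Q t (st s a w) a')%R + (gamma * dl)%:E)%E).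
    apply: leeD2r; apply: hmono; [exact: hX | exact: hX |] => w.
    by rewrite lerD2l; apply: ler_wpM2l; [exact: ltW | exact: himp].
  rewrite -htrans; last exact: hX.
  apply: hmono; [|exact: hX|] => [|w].
    apply: measurable_realfun.measurable_funD; [exact: hX | exact: measurable_cst].
  rewrite -addrA lerD2l -mulrDr; apply: ler_wpM2l; first exact: ltW.
  have -> : \sum_(a' : A) softmax (theta t.+1) (st s a w) a' * Q t (st s a w) a' + dl
      = \sum_(a' : A) softmax (theta t.+1) (st s a w) a' * (Q t (st s a w) a' + dl).
    under [RHS]eq_bigr do rewrite mulrDr.
    by rewrite big_split /= -mulr_suml (softmax_sum1 _ _ _ _ _ a) mul1r.
  apply: ler_sum => a' _; apply: ler_wpM2l; [exact: softmax_ge0 | exact: hdl].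
have hQmono : forall s a, Q t s a <= Q t.+1 s a.
  move=> s a.
  pose F := fun p : S * A => Q t.+1 p.1 p.2 - Q t p.1 p.2.
  case: (@arg_minP _ _ _ (s, a) xpredT F erefl) => p _ hp.
  set dl := F p.
  have hdl : forall s a, Q t s a + dl <= Q t.+1 s a.
    move=> s' a'; have := hp (s', a') erefl; rewrite /F /= => h.
    by rewrite -lerBrDl.
  have := key dl hdl p.1 p.2.
  have e : Q t.+1 p.1 p.2 = Q t p.1 p.2 + dl by rewrite /dl /F addrC subrK.
  rewrite e lerD2l => hgd.
  have dl0 : 0 <= dl.
    have : 0 <= (1 - gamma) * dl by rewrite mulrBl mul1r subr_ge0.
    by rewrite pmulr_rge0 // subr_gt0.
  by apply: le_trans (hdl s a); rewrite lerDl.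
split; first exact: hQmono.
move=> s; apply: le_trans (himp s) _.
by apply: ler_sum => a _; apply: ler_wpM2l; [exact: softmax_ge0 | exact: hQmono].
Qed.
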